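(* Consider the SEIR$^{\mathrm T}$R$^{\mathrm P}$D system with distributed delays in the context, with constant history data $S(s)=c_S>0$, $I(s)=c_I>0$ for all $s\le0$, and initial data $E(0)=\beta_0c_Ic_S\int_\theta^L\Psi(\tau)\tau\,d\tau$, $R^{\mathrm T}(0)=c_Ip\gamma\int_\epsilon^M\Phi(\rho)\rho\,d\rho$, $R^{\mathrm P}(0)=(1-p)\gamma c_I\int_\theta^L\Psi(\tau)\tau\,d\tau$. Then there exists $r>0$ such that each of the solution functions $S,E,I,R^{\mathrm T},R^{\mathrm P}$ is $r$-increasingly smooth.
   Context: The system is $S'(t)=-\beta(t)I(t)S(t)+p\gamma\int_{0}^{\infty}I(t-\rho)\Phi(\rho)\,d\rho$, $E'(t)=\beta(t)I(t)S(t)-\int_{0}^{\infty}\beta(t-\tau)I(t-\tau)S(t-\tau)\Psi(\tau)\,d\tau$, $I'(t)=\int_{0}^{\infty}\beta(t-\tau)I(t-\tau)S(t-\tau)\Psi(\tau)\,d\tau-\gamma I(t)-\mu I(t)$, $R^{\mathrm T\prime}(t)=p\gamma I(t)-p\gamma\int_{0}^{\infty}I(t-\rho)\Phi(\rho)\,d\rho$, $R^{\mathrm P\prime}(t)=(1-p)\gamma I(t)$, $D'(t)=\mu I(t)$, for $t>0$, with constants $\gamma,\mu\ge0$, $p\in[0,1]$. $\beta$ is a non-negative smooth function on $\mathbb R$ with $\beta(s)=\beta_0$ for $s\le0$. $\Psi,\Phi$ are non-negative Lebesgue integrable probability densities on $[0,\infty)$ with $\operatorname{supp}\Psi\subset[\theta,L]$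 for some $0<\theta<L<\infty$ and $\operatorname{supp}\Phi\subset[\epsilon,M]$ for some $0<\epsilon<M<\infty$. Definition: for $r>0$, a function $f$ defined on $(0,\infty)$ is $r$-increasingly smooth if $f\in C^{n+1}((rn,\infty))$ for every $n=0,1,2,\ldots$. *)

(* Defs.v *)
From HB Require Import structures.
From mathcomp Require Import all_boot all_order all_algebra.
From mathcomp Require Import all_classical all_reals all_analysis.
Set Implicit Arguments. Unset Strict Implicit. Unset Printing Implicit Defensive.
Import Order.TTheory GRing.Theory Num.Theory.
Import numFieldNormedType.Exports.
Local Open Scope classical_set_scope.
Local Open Scope ring_scope.

Notation Leb := lebesgue_measure.

Definition Ck_from {R : realType} (k : nat) (f : R -> R) (a : R) : Prop :=
  forall x : R, a < x ->
    (forall j : nat, (j < k)%N -> derivable (derive1n j f) x 1) /\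
    {for x, continuous (derive1n k f)}.

Definition increasingly_smooth {R : realType} (r : R) (f : R -> R) : Prop :=
  forall n : nat, Ck_from n.+1 f (r * n%:R).

Definition smooth_R {R : realType} (f : R -> R) : Prop :=
  forall (k : nat) (x : R), derivable (derive1n k f) x 1.

Definition density_supported {R : realType} (Psi : R -> R) (a b : R) : Prop :=
  (forall x, 0 <= x -> 0 <= Psi x) /\
  Leb.-integrable `[0, +oo[ (EFin \o Psi) /\
  \int[Leb]_(x in `[0, +oo[) Psi x = 1 /\
  (forall x, 0 <= x -> (x < a \/ b < x) -> Psi x = 0).

Definition SEIRD_solution {R : realType} (beta Psi Phi : R -> R)
    (gamma mu p : R) (S E I RT RP D : R -> R) : Prop :=
  {within `[0, +oo[, continuous S} /\ {within `[0, +oo[, continuous E} /\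
  {within `[0, +oo[, continuous I} /\ {within `[0, +oo[, continuous RT} /\
  {within `[0, +oo[, continuous RP} /\ {within `[0, +oo[, continuous D} /\
  forall t : R, 0 < t ->
    (derivable S t 1 /\ derivable E t 1 /\ derivable I t 1 /\
     derivable RT t 1 /\ derivable RP t 1 /\ derivable D t 1) /\
    let infl := \int[Leb]_(tau in `[0, +oo[)
                  (beta (t - tau) * I (t - tau) * S (t - tau) * Psi tau) in
    let rec := \int[Leb]_(rho in `[0, +oo[) (I (t - rho) * Phi rho) in
    (derive1 S t = - beta t * I t * S t + p * gamma * rec /\
     derive1 E t = beta t * I t * S t - infl /\
     derive1 I t = infl - gamma * I t - mu * I t /\
     derive1 RT t = p * gamma * I t - p * gamma * rec /\
     derive1 RP t = (1 - p) * gamma * I t /\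
     derive1 D t = mu * I t).

(* Main.v *)
Require Import Defs.
From HB Require Import structures.
From mathcomp Require Import all_boot all_order all_algebra.
From mathcomp Require Import all_classical all_reals all_analysis.
From mathcomp Require Import measurable_realfun lebesgue_integral_under.
From mathcomp Require Import lra ring.
Import Order.TTheory GRing.Theory Num.Theory.
Import numFieldNormedType.Exports.
Local Open Scope classical_set_scope.
Local Open Scope ring_scope.
Set Implicit Arguments. Unset Strict Implicit.
Section Ck.
Context {R : realType}.
Implicit Types (f g : R -> R) (a b : R).

Lemma derivable_cont f x : derivable f x 1 -> {for x, continuous f}.
Proof. by move=> /derivable1_diffP/differentiable_continuous. Qed.

Lemma derive1nS j f : derive1n j.+1 f = derive1n j (derive1 f).
Proof. by rewrite /derive1n iterSr. Qed.

Lemma Ck_cont k f a : Ck_from k f a -> forall x, a < x -> {for x, continuous f}.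
Proof.
case: k => [|k] H x ax; have [H1 H2] := H x ax; first exact: H2.
exact: derivable_cont (H1 0%N isT).
Qed.

Lemma Ck_succ k f a : (forall x, a < x -> derivable f x 1) ->
  Ck_from k (derive1 f) a -> Ck_from k.+1 f a.
Proof.
move=> df H x ax; have [H1 H2] := H x ax; split; last by move: H2; rewrite -derive1nS.
by case=> [|j] jk; [exact: df ax|rewrite derive1nS; exact: H1].
Qed.

Lemma Ck_pred k f a : Ck_from k.+1 f a ->
  (forall x, a < x -> derivable f x 1) /\ Ck_from k (derive1 f) a.
Proof.
move=> H; split; first by move=> x /H [H1 _]; exact: (H1 0%N).
move=> x /H [H1 H2]; split; last by rewrite -derive1nS.
by move=> j jk; rewrite -derive1nS; exact: H1.
Qed.

Lemma Ck_mono k f a b : a <= b -> Ck_from k f a -> Ck_from k f b.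
Proof. by move=> ab H x bx; apply: H; exact: le_lt_trans bx. Qed.

Lemma Ck_le j k f a : (j <= k)%N -> Ck_from k f a -> Ck_from j f a.
Proof.
elim: j k f => [|j IH] [|k] f // jk H.
- by move=> x ax; split => //; exact: Ck_cont H x ax.
- have [d H'] := Ck_pred H; apply: Ck_succ => //; exact: IH _ _ jk H'.
Qed.

Lemma near_gt a x : a < x -> \forall y \near x, a < y.
Proof. exact: lt_nbhsr. Qed.

Lemma derive1n_local j f g a : (forall x, a < x -> f x = g x) ->
  forall x, a < x -> derive1n j f x = derive1n j g x.
Proof.
move=> fg; elim: j => [|j IH] x ax; first exact: fg.
rewrite /= !derive1E; apply: near_eq_derive.
by near=> y; apply: IH; near: y; exact: near_gt.
Unshelve. all: by end_near. Qed.

Lemma Ck_local k f g a : (forall x, a < x -> f x = g x) ->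
  Ck_from k f a -> Ck_from k g a.
Proof.
move=> fg H x ax; have [H1 H2] := H x ax.
have E j : \forall y \near x, derive1n j f y = derive1n j g y.
  by near=> y; apply: derive1n_local fg _ _; near: y; exact: near_gt.
split.
  move=> j jk; apply: near_eq_derivable (H1 j jk).
  exact: E.
rewrite /prop_for /continuous_at -(derive1n_local k fg ax).
exact: (cvg_trans (near_eq_cvg (E k)) H2).
Unshelve. all: by end_near. Qed.


Lemma Ck_cst k c a : Ck_from k (cst c) a.
Proof.
elim: k c => [|k IH] c.
  by move=> x ax; split => //; exact: cst_continuous.
apply: Ck_succ; first by move=> x _; exact: derivable_cst.
apply: (@Ck_local _ (cst 0)) (IH 0) => x _.
by rewrite derive1_cst.
Qed.

Lemma Ck_add k f g a : Ck_from k f a -> Ck_from k g a ->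
  Ck_from k (fun x => f x + g x) a.
Proof.
elim: k f g => [|k IH] f g Hf Hg.
  move=> x ax; split => //.
  exact: cvgD (Ck_cont Hf ax) (Ck_cont Hg ax).
have [df Hf'] := Ck_pred Hf; have [dg Hg'] := Ck_pred Hg.
apply: Ck_succ; first by move=> x ax; exact: derivableD (df x ax) (dg x ax).
apply: Ck_local (IH _ _ Hf' Hg') => x ax.
by rewrite !derive1E deriveD //; [apply: df | apply: dg].
Qed.

Lemma Ck_mul k f g a : Ck_from k f a -> Ck_from k g a ->
  Ck_from k (fun x => f x * g x) a.
Proof.
elim: k f g => [|k IH] f g Hf Hg.
  move=> x ax; split => //.
  exact: cvgM (Ck_cont Hf ax) (Ck_cont Hg ax).
have [df Hf'] := Ck_pred Hf; have [dg Hg'] := Ck_pred Hg.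
have Hf0 := Ck_le (leqnSn k) Hf; have Hg0 := Ck_le (leqnSn k) Hg.
apply: Ck_succ; first by move=> x ax; exact: derivableM (df x ax) (dg x ax).
apply: Ck_local (Ck_add (IH _ _ Hf0 Hg') (IH _ _ Hg0 Hf')) => x ax.
by rewrite !derive1E deriveM; [|apply: df|apply: dg].
Qed.

Lemma Ck_smooth k f a : smooth_R f -> Ck_from k f a.
Proof.
move=> sf x ax; split; first by move=> j _; exact: sf.
exact: derivable_cont (sf k x).
Qed.

End Ck.
Section Conv.
Context {R : realType}.
Variables (Phi : R -> R) (M : R).
Hypothesis M0 : 0 < M.
Hypothesis intPhi : Leb.-integrable `[0, +oo[ (EFin \o Phi).
Hypothesis Phi0 : forall x, M < x -> Phi x = 0.

Definition conv (g : R -> R) t := \int[Leb]_(y in `[0, +oo[) (g (t - y) * Phi y).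
Definition conv' (g : R -> R) t := \int[Leb]_(y in `[0, M]) (g (t - y) * Phi y).

Lemma conv_conv' g t : conv g t = conv' g t.
Proof.
rewrite /conv /conv' Rintegral_mkcond [RHS]Rintegral_mkcond. apply: eq_Rintegral => y _.
rewrite /patch; case: ifPn; case: ifPn => //; rewrite !inE /= !in_itv /= ?andbT.
- by move=> yM y0; rewrite Phi0 ?mulr0 //; move/negP: yM; rewrite in_setE /= in_itv /= y0 /= => /negP; rewrite -ltNge.
- move=> /ssrbool.andP[y0 _] /negP; rewrite in_setE /= in_itv /= y0 andbT. by move=> /(_ isT).
Qed.

Lemma cont_bound (g : R -> R) a c d : a < c ->
  (forall x, a < x -> {for x, continuous g}) ->
  exists C, 0 <= C /\ forall s, c <= s -> s <= d -> `|g s| <= C.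
Proof.
move=> ac cg; have [dc|cd] := ltP d c.
  by exists 0; split => // s cs sd; have := lt_le_trans dc (le_trans cs sd); rewrite ltxx.
have cn : {within `[c, d], continuous (fun s => `|g s|)}.
  apply: continuous_in_subspaceT => s; rewrite inE /= in_itv /= => /andP[cs _].
  apply: (@continuous_comp _ _ _ g Num.norm); first exact: cg (lt_le_trans ac cs).
  exact: norm_continuous.
have [s0 _ Hs0] := EVT_max cd cn.
exists `|g s0|; split => // s cs sd; apply: Hs0.
by rewrite in_itv /= cs sd.
Qed.

Let mB := measurable_itv (R:=R) `[0, M].

Lemma intPhiM : Leb.-integrable `[0, M] (EFin \o Phi).
Proof.
apply: (integrableS _ _ _ intPhi); [exact: measurable_itv|exact: measurable_itv|].
by move=> y /=; rewrite !in_itv /= => /ssrbool.andP[->].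
Qed.

Lemma transl_cont (g : R -> R) a t y : (forall x, a < x -> {for x, continuous g}) ->
  a < t - y -> {for y, continuous (fun y => g (t - y))}.
Proof.
move=> cg ay.
apply: (@continuous_comp _ _ _ (fun y => t - y) g); last exact: cg.
exact: cvgB (cvg_cst t) cvg_id.
Qed.

Lemma int_conv (g : R -> R) a t : (forall x, a < x -> {for x, continuous g}) ->
  a + M < t -> Leb.-integrable `[0, M] (EFin \o (fun y => g (t - y) * Phi y)).
Proof.
move=> cg aMt.
have aM : a < t - M by rewrite ltrBrDr.
have [C [C0 HC]] := cont_bound t aM cg.
pose h := fun y => g (t - y).
apply: (@eq_integrable _ _ _ Leb _ _ ((EFin \o Phi) \* (EFin \o h))%E); first exact: measurable_itv.
  by move=> y _ /=; rewrite -EFinM mulrC.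
apply: integrableMl => //; first exact: intPhiM.
- apply: subspace_continuous_measurable_fun; first exact: mB.
  apply: continuous_in_subspaceT => y; rewrite inE /= in_itv /= => /ssrbool.andP[y0 yM].
  apply: transl_cont cg _; apply: lt_le_trans aM _; by rewrite lerB.
- exists C; split; first exact: num_real.
  move=> z Cz y yB; apply: (le_trans _ (ltW Cz)).
  move: yB => /=; rewrite in_itv /= => /ssrbool.andP[y0 yM].
  by apply: HC; rewrite ?lerB // gerBl.
Qed.

Lemma intG (C : R) : Leb.-integrable `[0, M] (EFin \o (fun y => C * `|Phi y|)).
Proof.
have := @integrableZl _ _ _ Leb _ mB C _ (integrable_norm intPhiM).
by apply: eq_integrable; [exact: measurable_itv|move=> y _ /=; rewrite EFinM].
Qed.

Lemma mid_pt (a t : R) : a < t -> exists u, a < u /\ u < t.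
Proof. by move=> at_; exists ((a + t) / 2); split; lra. Qed.

Lemma conv'_cont (g : R -> R) a t : (forall x, a < x -> {for x, continuous g}) ->
  a + M < t -> {for t, continuous (conv' g)}.
Proof.
move=> cg aMt.
have [u [aMu ut]] := mid_pt aMt.
have aM : a < u - M by rewrite ltrBrDr.
have [C [C0 HC]] := cont_bound (t + 1) aM cg.
have Iu x : `]u, t + 1[%classic x -> a + M < x.
  by rewrite /= in_itv /= => /ssrbool.andP[ux _]; exact: lt_trans ux.
apply: (@continuity_under_integral R _ _ Leb (fun x y => g (x - y) * Phi y) `[0, M] mB u (t + 1)).
- by move=> x /Iu; exact: int_conv.
- apply: aeW => y yB x; rewrite inE => /Iu xa.
  apply: cvgMl; apply: (@continuous_comp _ _ _ (fun x => x - y) g); last first.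
    apply: cg; move: yB => /=; rewrite in_itv /= => /ssrbool.andP[_ yM].
    lra.
  exact: cvgB cvg_id (cvg_cst y).
- exact: intG C.
- move=> x Ix; apply: aeW => y yB; rewrite normrM ler_wpM2r //.
  move: Ix yB => /=; rewrite !in_itv /= => /ssrbool.andP[ux xv] /ssrbool.andP[y0 yM].
  apply: HC.
  + lra.
  + lra.
- rewrite inE /= in_itv /= ut /=; lra.
Qed.

Lemma shiftM_derive (g : R -> R) (y c x : R) : derivable g (x - y) 1 ->
  is_derive x (1:R) (fun z => g (z - y) * c) (derive1 g (x - y) * c).
Proof.
move=> dg.
have hd : is_derive x (1:R) (fun z => z - y) 1 by apply: is_derive_eq; rewrite subr0.
have h2 : is_derive (x - y) (1:R) g (derive1 g (x - y)).
  by rewrite derive1E; exact: derivableP.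
have h3 := @is_derive1_comp _ g (fun z => z - y) x _ _ h2 hd.
rewrite mulr1 in h3.
apply: is_derive_eq; rewrite scaler0 add0r; exact: mulrC.
Qed.

Lemma conv'_deriv (g : R -> R) a t : (forall x, a < x -> derivable g x 1) ->
  (forall x, a < x -> {for x, continuous (derive1 g)}) -> a + M < t ->
  derivable (conv' g) t 1 /\ derive1 (conv' g) t = conv' (derive1 g) t.
Proof.
move=> dg cdg aMt.
have [u [aMu ut]] := mid_pt aMt.
have aM : a < u - M by lra.
have [C [C0 HC]] := cont_bound (t + 1) aM cdg.
have It : `]u, t + 1[%classic t by rewrite /= in_itv /= ut /=; lra.
have xy x y : `]u, t + 1[%classic x -> `[0, M]%classic y -> a < x - y.
  by rewrite /= !in_itv /= => /ssrbool.andP[ux _] /ssrbool.andP[_ yM]; lra.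
have bd x y : `]u, t + 1[%classic x -> `[0, M]%classic y ->
    u - M <= x - y /\ x - y <= t + 1.
  by rewrite /= !in_itv /= => /ssrbool.andP[ux xv] /ssrbool.andP[y0 yM]; split; lra.
have der x y (Ix : `]u, t + 1[%classic x) (By : `[0, M]%classic y) :=
  shiftM_derive (Phi y) (dg _ (xy _ _ Ix By)).
have d1 x y : `]u, t + 1[%classic x -> `[0, M]%classic y ->
    partial1of2 (fun x y => g (x - y) * Phi y) x y = derive1 g (x - y) * Phi y.
  move=> Ix By; rewrite /partial1of2 /= derive1E.
  exact: (@derive_val _ _ _ _ _ _ _ (der x y Ix By)).
have intf x : `]u, t + 1[%classic x ->
    Leb.-integrable `[0, M] (EFin \o (fun y => g (x - y) * Phi y)).
  move=> Ix; apply: (int_conv (a := a)).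
    by move=> z az; exact: derivable_cont (dg z az).
  by move: Ix; rewrite /= in_itv /= => /ssrbool.andP[ux _]; lra.
have derf1 x y : `]u, t + 1[%classic x -> `[0, M]%classic y ->
    derivable (fun x => g (x - y) * Phi y) x 1.
  by move=> Ix By; exact: (@ex_derive _ _ _ _ _ _ _ (der x y Ix By)).
have G0 y : 0 <= C * `|Phi y| by rewrite mulr_ge0.
have Gub x y : `]u, t + 1[%classic x -> `[0, M]%classic y ->
    `|partial1of2 (fun x y => g (x - y) * Phi y) x y| <= C * `|Phi y|.
  move=> Ix By; rewrite d1 // normrM ler_wpM2r //.
  by have [? ?] := bd x y Ix By; apply: HC.
split.
- exact: (@derivable_under_integral R _ _ Leb (fun x y => g (x - y) * Phi y)
    `[0, M] mB t u (t + 1) It intf derf1 _ G0 (intG C) Gub).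
- rewrite /conv' (@differentiation_under_integral R _ _ Leb (fun x y => g (x - y) * Phi y)
    `[0, M] mB t u (t + 1) It intf derf1 _ G0 (intG C) Gub).
  by apply: eq_Rintegral => y /[!inE] By; rewrite d1.
Qed.

Lemma Ck_conv' k (g : R -> R) a : Ck_from k g a -> Ck_from k (conv' g) (a + M).
Proof.
elim: k g => [|k IH] g H.
  move=> x ax; split => //; exact: conv'_cont (Ck_cont H) ax.
have [dg Hg'] := Ck_pred H; have cdg := Ck_cont Hg'.
apply: Ck_succ; first by move=> x ax; exact: (conv'_deriv dg cdg ax).1.
apply: Ck_local (IH _ Hg') => x ax.
by rewrite (conv'_deriv dg cdg ax).2.
Qed.

Lemma Ck_conv k (g : R -> R) a : Ck_from k g a -> Ck_from k (conv g) (a + M).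
Proof.
move=> H; apply: Ck_local (Ck_conv' H) => x _; by rewrite conv_conv'.
Qed.
End Conv.

Section Glue.
Context {R : realType}.
Lemma glue (f : R -> R) c : {within `[0, +oo[, continuous f} ->
  (forall s, s <= 0 -> f s = c) -> forall x, {for x, continuous f}.
Proof.
move=> /continuous_within_itvcyP [cin cr] fc x.
have [x0|x0|->] := ltgtP x 0.
- have E : \forall y \near x, f x = f y.
    by near=> y; rewrite !fc ?(ltW x0) //; apply: ltW; near: y; exact: lt_nbhsl.
  exact: (cvg_trans (near_eq_cvg E) (cvg_cst (f x))).
- by apply: cin; rewrite in_itv /= x0.
- rewrite /prop_for /continuous_at. apply/(left_right_continuousP f 0); split => //.
  have E : \forall y \near 0^'-, f 0 = f y.
    by near=> y; rewrite !fc ?lexx //; apply: ltW; near: y; exact: nbhs_left_lt.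
  exact: (cvg_trans (near_eq_cvg E) (cvg_cst (f 0))).
Unshelve. all: by end_near. Qed.
End Glue.

Unset Implicit Arguments.

Theorem theorem4 (R : realType) (beta : R -> R) (beta0 : R)
  (Psi Phi : R -> R) (theta L eps M gamma mu p cS cI : R)
  (S E I RT RP D : R -> R) :
  smooth_R beta -> (forall s, 0 <= beta s) -> (forall s, s <= 0 -> beta s = beta0) ->
  0 < theta -> theta < L -> 0 < eps -> eps < M ->
  density_supported Psi theta L -> density_supported Phi eps M ->
  0 <= gamma -> 0 <= mu -> 0 <= p -> p <= 1 ->
  0 < cS -> 0 < cI ->
  (forall s, s <= 0 -> S s = cS) -> (forall s, s <= 0 -> I s = cI) ->
  E 0 = beta0 * cI * cS * \int[Leb]_(tau in `[theta, L]) (Psi tau * tau) ->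
  RT 0 = cI * p * gamma * \int[Leb]_(rho in `[eps, M]) (Phi rho * rho) ->
  RP 0 = (1 - p) * gamma * cI * \int[Leb]_(tau in `[theta, L]) (Psi tau * tau) ->
  SEIRD_solution beta Psi Phi gamma mu p S E I RT RP D ->
  exists r : R, 0 < r /\
    [/\ increasingly_smooth r S, increasingly_smooth r E, increasingly_smooth r I,
        increasingly_smooth r RT & increasingly_smooth r RP].
Proof.
move=> sb _ _ th0 thL ep0 epM [_ [iPsi [_ sPsi]]] [_ [iPhi [_ sPhi]]] _ _ _ _ _ _
  Sc Ic _ _ _ [cSS [_ [cII [_ [_ [_ Hsol]]]]]].
have Psi0 x : L < x -> Psi x = 0.
  by move=> Lx; apply: sPsi; [lra|right].
have Phi0 x : M < x -> Phi x = 0.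
  by move=> Mx; apply: sPhi; [lra|right].
pose r := L + M.
have r0 : 0 < r by rewrite /r; lra.
pose h := fun s => beta s * I s * S s.
have gS := glue cSS Sc; have gI := glue cII Ic.
have C0 (f : R -> R) a : (forall x, {for x, continuous f}) -> Ck_from 0 f a.
  by move=> cf x _; split => //; exact: cf.
have rn0 (n : nat) : 0 <= r * n%:R by rewrite mulr_ge0 // ltW.
have rL : L <= r by rewrite /r; lra.
have rM : M <= r by rewrite /r; lra.
have pos (n : nat) x : r * n%:R < x -> 0 < x.
  by move=> xr; exact: le_lt_trans (rn0 n) xr.
have e (n : nat) : r * n.+1%:R - r = r * n%:R by rewrite -natr1 mulrDr mulr1 addrK.
have Dn n : Ck_from n S (r * n%:R - r) -> Ck_from n I (r * n%:R - r) ->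
  [/\ Ck_from n I (r * n%:R), Ck_from n h (r * n%:R),
      Ck_from n (conv Psi h) (r * n%:R) & Ck_from n (conv Phi I) (r * n%:R)].
  move=> HS HI.
  have Hh : Ck_from n h (r * n%:R - r) by exact: Ck_mul (Ck_mul (Ck_smooth n sb) HI) HS.
  have le1 : r * n%:R - r <= r * n%:R by lra.
  split.
  - exact: Ck_mono le1 HI.
  - exact: Ck_mono le1 Hh.
  - by apply: Ck_mono (Ck_conv iPsi Psi0 Hh); lra.
  - by apply: Ck_mono (Ck_conv iPhi Phi0 HI); lra.
have P n : Ck_from n S (r * n%:R - r) /\ Ck_from n I (r * n%:R - r).
  elim: n => [|n [HS HI]]; first by split; apply: C0.
  have [HI' Hh' Hinf Hrec] := Dn n HS HI.
  rewrite e; split.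
  - apply: Ck_succ.
      by move=> x /pos x0; have [[? _] _] := Hsol x x0.
    apply: (Ck_local (f := fun x => cst (-1) x * h x + cst (p * gamma) x * conv Phi I x)).
      move=> x /pos x0; have [_ /= [-> _]] := Hsol x x0.
      rewrite /h /conv /cst /=; ring.
    by apply: Ck_add; apply: Ck_mul => //; exact: Ck_cst.
  - apply: Ck_succ.
      by move=> x /pos x0; have [[_ [_ [? _]]] _] := Hsol x x0.
    apply: (Ck_local (f := fun x => conv Psi h x + cst (- (gamma + mu)) x * I x)).
      move=> x /pos x0; have [_ /= [_ [_ [-> _]]]] := Hsol x x0.
      rewrite /h /conv /cst /=; ring.
    by apply: Ck_add => //; apply: Ck_mul => //; exact: Ck_cst.
exists r; split => //; split => n.
- by have [+ _] := P n.+1; rewrite e.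
- have [HS HI] := P n; have [HI' Hh' Hinf Hrec] := Dn n HS HI.
  apply: Ck_succ.
    by move=> x /pos x0; have [[_ [? _]] _] := Hsol x x0.
  apply: (Ck_local (f := fun x => h x + cst (-1) x * conv Psi h x)).
    move=> x /pos x0; have [_ /= [_ [-> _]]] := Hsol x x0.
    rewrite /h /conv /cst /=; ring.
  by apply: Ck_add => //; apply: Ck_mul => //; exact: Ck_cst.
- by have [_ +] := P n.+1; rewrite e.
- have [HS HI] := P n; have [HI' Hh' Hinf Hrec] := Dn n HS HI.
  apply: Ck_succ.
    by move=> x /pos x0; have [[_ [_ [_ [? _]]]] _] := Hsol x x0.
  apply: (Ck_local (f := fun x => cst (p * gamma) x * I x + cst (- (p * gamma)) x * conv Phi I x)).
    move=> x /pos x0; have [_ /= [_ [_ [_ [-> _]]]]] := Hsol x x0.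
    rewrite /h /conv /cst /=; ring.
  by apply: Ck_add; apply: Ck_mul => //; exact: Ck_cst.
- have [HS HI] := P n; have [HI' Hh' Hinf Hrec] := Dn n HS HI.
  apply: Ck_succ.
    by move=> x /pos x0; have [[_ [_ [_ [_ [? _]]]]] _] := Hsol x x0.
  apply: (Ck_local (f := fun x => cst ((1 - p) * gamma) x * I x)).
    move=> x /pos x0; have [_ /= [_ [_ [_ [_ [-> _]]]]]] := Hsol x x0.
    by rewrite /cst.
  by apply: Ck_mul => //; exact: Ck_cst.
Qed.
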